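(* Let $\mathbb{F}$ be a field of characteristic $2$, $D$ an oriented diagram of a link $L$, $w_c\in\mathbb{F}$ weights for the components, and $(C(D),d=d_0+d_1)$ the deformed complex. Let $p$ and $q$ be marked points on $D$ lying on the same strand through crossing $i$, one on each side of that crossing (so that the arc of $D$ between them passes through crossing $i$ and no other crossing). Then $X_p$ and $X_q$ are chain homotopic endomorphisms of $(C(D),d)$.
   Context: For crossings $1,\dots,n$ and $I\in\{0,1\}^n$ let $I$ also denote the set of circles of the complete resolution (Khovanov $0$/$1$-smoothings). With $V=\mathbb{F}[x]/(x^2)$, $V(I)=\bigotimes_{\text{circles}}V$, identified with $\mathbb{F}[x_1,\dots,x_{p(I)}]/(x_j^2)$ with one variable per circle, and $C(D)=\bigoplus_IV(I)$. For an edge $(I,J)$ ($J$ from $I$ by changing digit $i$ from $0$ to $1$), $\mathcal{A}(I,J)$ is the saddle merge/split map ($m$, or $\Delta(1)=1\otimes x+x\otimes1$, $\Delta(x)=x\otimes x$) and $\mathcal{A}(J,I)$ is the map of the reversed saddle. $d_0=\sum_{(I,J)}\mathcal{A}(I,J)$ and $d_1=\sum_{(I,J)}s(i)(w^i_{\mathrm{over}}-w^i_{\mathrm{under}})\mathcal{A}(J,I)$ (signs irrelevant in characteristic 2), where $w^i_{\mathrm{over/under}}$ are the weights of the over/under strands at crossing $i$. For a marked point $p$ away from crossings, $X_p:C(D)\to C(D)$ multiplies $y\in V(I)$ by the variable of the circle of $I$ through $p$; it is a chain map for $d$. *)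

(* Defs.v *)
From HB Require Import structures.
From mathcomp Require Import all_boot all_order all_algebra.
Set Implicit Arguments. Unset Strict Implicit. Unset Printing Implicit Defensive.
Import GRing.Theory.
Local Open Scope ring_scope.

(* Link diagrams as planar diagram (PD) codes.                                 *)
(*  n crossings, m edge labels ('I_m).  pd k j is the edge at slot j of        *)
(*  crossing k; slots 0..3 are listed counterclockwise, slots 0 and 2 belong   *)
(*  to the under strand, slots 1 and 3 to the over strand (KnotTheory's        *)
(*  X[a,b,c,d] convention).  An edge label occurring in no slot is a            *)
(*  crossingless circle component of the diagram.                               *)

Section Diagram.
Variables (n m : nat) (pd : 'I_n -> 'I_4 -> 'I_m).

Definition slots_of (e : 'I_m) : {set 'I_n * 'I_4} :=
  [set s | pd s.1 s.2 == e].

Definition pd_wf : bool :=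
  [forall e, (#|slots_of e| == 0%N) || (#|slots_of e| == 2%N)].

Definition mate (s : 'I_n * 'I_4) : 'I_n * 'I_4 :=
  odflt s [pick t | (t != s) && (pd t.1 t.2 == pd s.1 s.2)].

(* face-tracing permutation of darts: rotation o edge involution *)
Definition face_step (s : 'I_n * 'I_4) : 'I_n * 'I_4 :=
  ((mate s).1, ordS (mate s).2).

Definition nfaces : nat := #|[set s | froot face_step s == s]|.

Definition cross_adj : rel 'I_n :=
  fun k k' => [exists j, exists j', pd k j == pd k' j'].

Definition ncross_comp : nat := #|[set k | fingraph.root cross_adj k == k]|.

(* Planarity (every connected component of the underlying 4-valent graph,
   with the rotation system given by the PD code, embeds in the sphere):
   Euler's formula V - E + F = 2 per component, with V = n, E = 2n. *)
Definition pd_planar : bool := nfaces == (n + 2 * ncross_comp)%N.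

Definition link_diagram : bool := pd_wf && pd_planar.

(* component weights, as functions on edges constant along each strand *)
Definition component_weight (F : Type) (wt : 'I_m -> F) : Prop :=
  forall k : 'I_n, wt (pd k (inord 0)) = wt (pd k (inord 2)) /\ wt (pd k (inord 1)) = wt (pd k (inord 3)).

(*  0-smoothing of X[a,b,c,d] joins (a,b),(c,d); 1-smoothing joins (b,c),(d,a). *)

Definition resolution := {ffun 'I_n -> bool}.

Definition smooth_joined (b : bool) (j j' : 'I_4) : bool :=
  if ~~ b then
    [|| [&& val j == 0%N & val j' == 1%N], [&& val j == 1%N & val j' == 0%N],
        [&& val j == 2%N & val j' == 3%N] | [&& val j == 3%N & val j' == 2%N]]
  else
    [|| [&& val j == 1%N & val j' == 2%N], [&& val j == 2%N & val j' == 1%N],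
        [&& val j == 3%N & val j' == 0%N] | [&& val j == 0%N & val j' == 3%N]].

Definition res_adj (I : resolution) : rel 'I_m :=
  fun e e' => [exists k, exists j, exists j',
    [&& smooth_joined (I k) j j', pd k j == e & pd k j' == e']].

(* the circle of I through edge e, represented by its canonical edge *)
Definition circ (I : resolution) (e : 'I_m) : 'I_m := fingraph.root (res_adj I) e.

Definition circles (I : resolution) : {set 'I_m} := [set e | circ I e == e].

(* The chain space C(D) = (+)_I V(I).  V(I) = F[x_c : c circle of I]/(x_c^2)  *)
(* has the monomial basis indexed by sets S of circles of I (monomial          *)
(* prod_{c in S} x_c).                                                         *)

Definition basis_ok (x : resolution * {set 'I_m}) : bool := x.2 \subset circles x.1.

Definition KhBasis := {x : resolution * {set 'I_m} | basis_ok x}.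

Variable F : fieldType.

Local Notation KhC := {ffun KhBasis -> F}.

Definition bv (I : resolution) (S : {set 'I_m}) : KhC :=
  [ffun b => ((val b == (I, S)) : bool)%:R].

Definition scv (a : F) (v : KhC) : KhC := [ffun b => a * v b].

Definition lin_ext (img : KhBasis -> KhC) (v : KhC) : KhC :=
  \sum_(b : KhBasis) scv (v b) (img b).

(* multiplication of the monomial S in V(J) by x_a *)
Definition mulx (J : resolution) (a : 'I_m) (S : {set 'I_m}) : KhC :=
  if a \in S then 0 else bv J (a |: S).

Definition flip (I : resolution) (k : 'I_n) : resolution :=
  [ffun j => if j == k then ~~ I j else I j].

(* saddle map A(I, flip I k) on the basis monomial S of V(I):
   merge m if the number of circles drops, split Delta otherwise,
   Delta(1) = 1 (x) x + x (x) 1, Delta(x) = x (x) x. *)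
Definition saddle (I : resolution) (k : 'I_n) (S : {set 'I_m}) : KhC :=
  let J := flip I k in
  let T := [set circ J c | c in S] in
  if #|T| != #|S| then 0 (* two factors x sent to the same circle: x^2 = 0 *)
  else if (#|circles J| < #|circles I|)%N then bv J T
  else mulx J (circ J (pd k (inord 0))) T + mulx J (circ J (pd k (inord 2))) T.

(* d0 : forward saddles;  d1 : reversed saddles weighted by w_over - w_under *)
Definition d0_img (wt : 'I_m -> F) (b : KhBasis) : KhC :=
  let I := (val b).1 in let S := (val b).2 in
  \sum_(k : 'I_n | ~~ I k) saddle I k S.

Definition d1_img (wt : 'I_m -> F) (b : KhBasis) : KhC :=
  let I := (val b).1 in let S := (val b).2 in
  \sum_(k : 'I_n | I k) scv (wt (pd k (inord 1)) - wt (pd k (inord 0))) (saddle I k S).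

Definition Kh_d (wt : 'I_m -> F) (v : KhC) : KhC :=
  lin_ext (fun b => d0_img wt b + d1_img wt b) v.

(* X_p for a marked point p on edge p *)
Definition Xmark (p : 'I_m) (v : KhC) : KhC :=
  lin_ext (fun b => mulx (val b).1 (circ (val b).1 p) (val b).2) v.

End Diagram.

Notation KhC pd F := {ffun KhBasis pd -> F}.

(* Submission.v *)
From Pilot Require Import Defs.
From HB Require Import structures.
From mathcomp Require Import all_boot all_order all_algebra.
Set Implicit Arguments. Unset Strict Implicit. Unset Printing Implicit Defensive.
Import GRing.Theory.
Local Open Scope ring_scope.

Definition o0 : 'I_4 := @Ordinal 4 0 isT.
Definition o1 : 'I_4 := @Ordinal 4 1 isT.
Definition o2 : 'I_4 := @Ordinal 4 2 isT.
Definition o3 : 'I_4 := @Ordinal 4 3 isT.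
Lemma inord0 : inord 0 = o0. Proof. by apply/val_inj; rewrite /= inordK. Qed.
Lemma inord1 : inord 1 = o1. Proof. by apply/val_inj; rewrite /= inordK. Qed.
Lemma inord2 : inord 2 = o2. Proof. by apply/val_inj; rewrite /= inordK. Qed.
Lemma inord3 : inord 3 = o3. Proof. by apply/val_inj; rewrite /= inordK. Qed.
Lemma ord4P (P : 'I_4 -> Prop) : P o0 -> P o1 -> P o2 -> P o3 -> forall j, P j.
Proof.
move=> h0 h1 h2 h3 [[|[|[|[|k]]]] Hj] //.
- by rewrite (_ : Ordinal Hj = o0) //; apply/val_inj.
- by rewrite (_ : Ordinal Hj = o1) //; apply/val_inj.
- by rewrite (_ : Ordinal Hj = o2) //; apply/val_inj.
- by rewrite (_ : Ordinal Hj = o3) //; apply/val_inj.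
Qed.
Lemma sj_sym b (j j' : 'I_4) : smooth_joined b j j' = smooth_joined b j' j.
Proof. by case: b; elim/ord4P: j; elim/ord4P: j'. Qed.

Lemma connect_eqv (T : finType) (e E : rel T) :
  reflexive E -> transitive E -> subrel e E -> subrel (connect e) E.
Proof.
move=> rE tE sE x _ /connectP[p hp ->]; elim: p x hp => //= y p IH x /andP[hxy /IH].
exact: tE (sE _ _ hxy).
Qed.

Section Comb.
Variables (n m : nat) (pd : 'I_n -> 'I_4 -> 'I_m).

Definition conn (I : resolution n) := connect (res_adj pd I).

Lemma res_adj_sym I : symmetric (res_adj pd I).
Proof.
move=> e e'; apply/existsP/existsP => -[k /existsP[j /existsP[j' /and3P[hs h1 h2]]]];
 exists k; apply/existsP; exists j'; apply/existsP; exists j; by rewrite sj_sym hs h1 h2.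
Qed.

Lemma conn_sym I : connect_sym (res_adj pd I).
Proof. exact: sym_connect_sym (@res_adj_sym I). Qed.

Lemma connC I x y : conn I x y = conn I y x.
Proof. exact: conn_sym. Qed.

Lemma connCi I x y : conn I x y -> conn I y x.
Proof. by rewrite connC. Qed.

Lemma conn_trans I x y z : conn I x y -> conn I y z -> conn I x z.
Proof. exact: connect_trans. Qed.

Lemma conn0 I x : conn I x x. Proof. exact: connect0. Qed.
Hint Resolve conn0 : core.

Lemma circP I x y : (circ pd I x == circ pd I y) = conn I x y.
Proof. exact: (root_connect (@conn_sym I)). Qed.

Lemma circ_eq I x y : (circ pd I x = circ pd I y) <-> conn I x y.
Proof. by rewrite -circP; split => [->|/eqP]. Qed.

Lemma circ_circ I x : circ pd I (circ pd I x) = circ pd I x.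
Proof. exact: (root_root (@conn_sym I)). Qed.

Lemma conn_circ I x : conn I x (circ pd I x).
Proof. exact: connect_root. Qed.

Definition R0 (t : 'I_n) (I : resolution n) : rel 'I_m := fun e e' =>
  [exists k, exists j, exists j',
    [&& k != t, smooth_joined (I k) j j', pd k j == e & pd k j' == e']].

Lemma flip_t (I : resolution n) t : flip I t t = ~~ I t.
Proof. by rewrite /flip ffunE eqxx. Qed.
Lemma flip_ne (I : resolution n) t k : k != t -> flip I t k = I k.
Proof. by rewrite /flip ffunE => /negbTE ->. Qed.
Lemma flipK (I : resolution n) t : flip (flip I t) t = I.
Proof. by apply/ffunP => k; rewrite /flip !ffunE; case: eqP => // ->; rewrite negbK. Qed.
Lemma flipC (I : resolution n) t k : flip (flip I t) k = flip (flip I k) t.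
Proof. by apply/ffunP => x; rewrite /flip !ffunE; case: eqP; case: eqP => // -> ->. Qed.

Lemma R0_flip I t : R0 t (flip I t) =2 R0 t I.
Proof.
move=> e e'; apply/existsP/existsP => -[k /existsP[j /existsP[j' /and4P[hk hs h1 h2]]]];
 exists k; apply/existsP; exists j; apply/existsP; exists j'; rewrite hk h1 h2 /= andbT.
  by rewrite flip_ne in hs.
by rewrite flip_ne.
Qed.

Lemma R0_adj t I : subrel (R0 t I) (res_adj pd I).
Proof.
move=> e e' /existsP[k /existsP[j /existsP[j' /and4P[hk hs h1 h2]]]].
by apply/existsP; exists k; apply/existsP; exists j; apply/existsP; exists j'; rewrite hs h1 h2.
Qed.

Lemma R0_conn t I x y : connect (R0 t I) x y -> conn I x y.
Proof. by apply: connect_sub => u v /R0_adj /connect1. Qed.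

Lemma R0_connf t I x y : connect (R0 t I) x y -> conn (flip I t) x y.
Proof. by move=> h; apply: (@R0_conn t); rewrite (eq_connect (R0_flip I t)). Qed.

Lemma adj_split t I e e' : res_adj pd I e e' ->
  R0 t I e e' \/ exists j j', [/\ smooth_joined (I t) j j', pd t j = e & pd t j' = e'].
Proof.
move=> /existsP[k /existsP[j /existsP[j' /and3P[hs /eqP h1 /eqP h2]]]].
case: (eqVneq k t) => [ekt|hk]; last first.
  by left; apply/existsP; exists k; apply/existsP; exists j; apply/existsP; exists j'; rewrite hk hs h1 h2 !eqxx.
by right; exists j, j'; subst k.
Qed.

Lemma conn_join (I : resolution n) t j j' : smooth_joined (I t) j j' -> conn I (pd t j) (pd t j').
Proof.
move=> hs; apply: connect1; apply/existsP; exists t; apply/existsP; exists j; apply/existsP; exists j'.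
by rewrite hs !eqxx.
Qed.

Section Slots.
Variable t : 'I_n.
Local Notation a := (pd t o0).
Local Notation b := (pd t o1).
Local Notation c := (pd t o2).
Local Notation d := (pd t o3).

Lemma allslots K : conn K a c -> forall j, conn K a (pd t j).
Proof.
move=> hac; apply: (ord4P (P := fun j => conn K a (pd t j))) => //.
- case hK: (K t).
    by apply: conn_trans hac _; apply: conn_join; rewrite hK.
  by rewrite connC; apply: conn_join; rewrite hK.
- case hK: (K t).
    by rewrite connC; apply: conn_join; rewrite hK.
  by apply: conn_trans hac _; apply: conn_join; rewrite hK.
Qed.

Lemma joins_any K bb j j' : conn K a c -> smooth_joined bb j j' -> conn K (pd t j) (pd t j').
Proof.
move=> hac _; apply: (@conn_trans _ _ a); first by rewrite connC; apply: allslots.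
exact: allslots.
Qed.

Lemma stepC I : conn I a c -> conn (flip I t) a c ->
  forall x y, conn (flip I t) x y = conn I x y.
Proof.
have H (K K' : resolution n) : (forall k, k != t -> K' k = K k) -> conn K' a c ->
    forall x y, conn K x y -> conn K' x y.
  move=> hKK hac; apply: connect_sub => u v /(adj_split t)[h|[j [j' [hs <- <-]]]].
    apply: connect1; move: h => /existsP[k /existsP[j /existsP[j' /and4P[hk hs h1 h2]]]].
    apply/existsP; exists k; apply/existsP; exists j; apply/existsP; exists j'.
    by rewrite hKK // hs h1 h2.
  exact: joins_any hs.
move=> h1 h2 x y; apply/idP/idP; apply: H => //.
  by move=> k hk; rewrite flip_ne.
by move=> k hk; rewrite flip_ne.
Qed.

Hypothesis hT : forall (I : resolution n) (j : 'I_4),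
  exists l : 'I_4, l != j /\ connect (R0 t I) (pd t j) (pd t l).

Lemma arcs_R0 I : ~~ conn I a c ->
  if I t then connect (R0 t I) a d /\ connect (R0 t I) c b
  else connect (R0 t I) a b /\ connect (R0 t I) c d.
Proof.
move=> hac.
have ja : forall j, smooth_joined (I t) o0 j -> conn I a (pd t j) by move=> j; apply: conn_join.
have jc : forall j, smooth_joined (I t) o2 j -> conn I c (pd t j) by move=> j; apply: conn_join.
have [la [hla ca]] := hT I o0; have [lc [hlc cc]] := hT I o2.
have caI := R0_conn ca; have ccI := R0_conn cc.
case hI: (I t) ja jc => ja jc.
- split.
  + move: hla ca caI; elim/ord4P: la => // _ ca caI; exfalso; move/negP: hac; apply.
    * apply: conn_trans caI _; rewrite connC; exact: jc.
    * by [].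
  + move: hlc cc ccI; elim/ord4P: lc => // _ cc ccI; exfalso; move/negP: hac; apply.
    * by rewrite connC.
    * rewrite connC; apply: conn_trans ccI _; rewrite connC; exact: ja.
- split.
  + move: hla ca caI; elim/ord4P: la => // _ ca caI; exfalso; move/negP: hac; apply.
    * by [].
    * apply: conn_trans caI _; rewrite connC; exact: jc.
  + move: hlc cc ccI; elim/ord4P: lc => // _ cc ccI; exfalso; move/negP: hac; apply.
    * by rewrite connC.
    * rewrite connC; apply: conn_trans ccI _; rewrite connC; exact: ja.
Qed.

Lemma stepA I : ~~ conn I a c -> forall x y,
  conn (flip I t) x y = [|| conn I x y, conn I x a && conn I y c | conn I x c && conn I y a].
Proof.
move=> hac.
have IJ : forall x y, conn I x y -> conn (flip I t) x y.
  apply: connect_sub => u v /(adj_split t)[h|[j [j' [hs <- <-]]]].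
    by apply: connect1; apply: (@R0_adj t); rewrite R0_flip.
  have := arcs_R0 hac; move: hs.
  case hI: (I t); elim/ord4P: j; elim/ord4P: j' => //= _ [h1 h2];
    first [exact: (R0_connf h1)|exact: (R0_connf h2)|rewrite conn_sym; exact: (R0_connf h1)|
         rewrite conn_sym; exact: (R0_connf h2)].
have acJ : conn (flip I t) a c.
  have := arcs_R0 hac; case hI2: (I t) => -[h1 h2].
  - apply: (conn_trans (R0_connf h1)); rewrite connC; apply: conn_join; by rewrite flip_t hI2.
  - apply: (conn_trans (R0_connf h1)); apply: conn_join; by rewrite flip_t hI2.
move=> x y; apply/idP/idP.
  move: x y; apply: (connect_eqv (E := fun x y =>
     [|| conn I x y, conn I x a && conn I y c | conn I x c && conn I y a])).
  - by move=> z; rewrite conn0.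
  - move=> y0 x0 z0 /or3P[/circ_eq h1|/andP[/circ_eq h1 /circ_eq h2]|/andP[/circ_eq h1 /circ_eq h2]]
       /or3P[/circ_eq h3|/andP[/circ_eq h3 /circ_eq h4]|/andP[/circ_eq h3 /circ_eq h4]];
    apply/or3P; solve [ constructor 1; apply/circ_eq; congruence
                      | constructor 2; apply/andP; split; apply/circ_eq; congruence
                      | constructor 3; apply/andP; split; apply/circ_eq; congruence ].
  - move=> u v /(adj_split t)[h|[j [j' [hs <- <-]]]].
      by move: h; rewrite R0_flip => h; rewrite (R0_conn (connect1 h)).
    rewrite flip_t in hs; case hI: (I t) in hs.
    + have e1 : circ pd I b = circ pd I c by apply/circ_eq; apply: conn_join; rewrite hI.
      have e2 : circ pd I d = circ pd I a by apply/circ_eq; apply: conn_join; rewrite hI.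
      move: hs; elim/ord4P: j; elim/ord4P: j' => //= _;
      apply/or3P; solve [ constructor 1; apply/circ_eq; congruence
                      | constructor 2; apply/andP; split; apply/circ_eq; congruence
                      | constructor 3; apply/andP; split; apply/circ_eq; congruence ].
    + have e1 : circ pd I a = circ pd I b by apply/circ_eq; apply: conn_join; rewrite hI.
      have e2 : circ pd I c = circ pd I d by apply/circ_eq; apply: conn_join; rewrite hI.
      move: hs; elim/ord4P: j; elim/ord4P: j' => //= _;
    apply/or3P; solve [ constructor 1; apply/circ_eq; congruence
                      | constructor 2; apply/andP; split; apply/circ_eq; congruence
                      | constructor 3; apply/andP; split; apply/circ_eq; congruence ].
case/or3P => [/IJ//|/andP[h1 h2]|/andP[h1 h2]].
  apply: conn_trans (IJ _ _ h1) _; apply: conn_trans acJ _; rewrite connC; exact: IJ.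
apply: conn_trans (IJ _ _ h1) _; rewrite connC in acJ; apply: conn_trans acJ _; rewrite connC; exact: IJ.
Qed.
End Slots.
End Comb.

Local Open Scope nat_scope.

Definition sp (b : bool) (j : 'I_4) : 'I_4 :=
  if b then (match val j with 0 => o3 | 1 => o2 | 2 => o1 | _ => o0 end)
  else (match val j with 0 => o1 | 1 => o0 | 2 => o3 | _ => o2 end).
Lemma sp_sj b j : smooth_joined b j (sp b j).
Proof. by case: b; elim/ord4P: j. Qed.
Lemma spK b j : sp b (sp b j) = j.
Proof. by case: b; elim/ord4P: j. Qed.
Lemma sp_ne b j : sp b j != j.
Proof. by case: b; elim/ord4P: j. Qed.

Section Topo.
Variables (n m : nat) (pd : 'I_n -> 'I_4 -> 'I_m).
Hypothesis wf : pd_wf pd.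
Local Notation lab s := (pd s.1 s.2).

Lemma mate_other (s u : 'I_n * 'I_4) : u != s -> lab u = lab s -> mate pd s = u.
Proof.
move=> hus hlab.
have : #|slots_of pd (lab s)| == 2%N.
  move/forallP: wf => /(_ (lab s)) /orP[/eqP/cards0_eq h|//].
  by have := in_set0 s; rewrite -h inE eqxx.
case/cards2P => x [y [hxy hS]].
have hs : s \in slots_of pd (lab s) by rewrite inE.
have hu : u \in slots_of pd (lab s) by rewrite inE hlab.
rewrite /mate; case: pickP => [v /andP[hv /eqP hl]|/(_ u)]; last by rewrite hus hlab eqxx.
have hv' : v \in slots_of pd (lab s) by rewrite inE hl.
move: hs hu hv'; rewrite hS !inE /=.
case/orP=> /eqP e1; case/orP=> /eqP e2; case/orP=> /eqP e3; subst;
  rewrite ?eqxx in hus hv *; by [|rewrite (negbTE hxy) in hv| rewrite eq_sym (negbTE hxy) in hv].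

Qed.

Lemma mate_spec s : mate pd s != s /\ lab (mate pd s) = lab s.
Proof.
have : #|slots_of pd (lab s)| == 2%N.
  move/forallP: wf => /(_ (lab s)) /orP[/eqP/cards0_eq h|//].
  by have := in_set0 s; rewrite -h inE eqxx.
case/cards2P => x [y [hxy hS]].
have hs : s \in slots_of pd (lab s) by rewrite inE.
have [u [hus hu]] : exists u, u != s /\ u \in slots_of pd (lab s).
  move: hs; rewrite hS !inE => /orP[/eqP e|/eqP e].
    by exists y; split; [rewrite e eq_sym | rewrite !inE eqxx orbT].
  by exists x; split; [rewrite e | rewrite !inE eqxx].
move: hu; rewrite inE => /eqP hu.
by rewrite (mate_other hus hu).
Qed.

Lemma mateK s : mate pd (mate pd s) = s.
Proof.
have [h1 h2] := mate_spec s.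
by apply: mate_other => //; rewrite eq_sym.
Qed.

Variable I : resolution n.
Definition sgm (s : 'I_n * 'I_4) := (s.1, sp (I s.1) s.2).
Lemma sgmK s : sgm (sgm s) = s.
Proof. by case: s => k j; rewrite /sgm /= spK. Qed.
Lemma sgm_ne s : sgm s != s.
Proof. case: s => k j; rewrite /sgm /= xpair_eqE eqxx /=; exact: sp_ne. Qed.

Definition pi s := sgm (mate pd s).
Lemma pi_inj : injective pi.
Proof. by move=> x y /(congr1 sgm); rewrite !sgmK => /(congr1 (mate pd)); rewrite !mateK. Qed.

Variable t : 'I_n.

Lemma topo (j : 'I_4) : exists l : 'I_4, l != j /\ connect (R0 pd t I) (pd t j) (pd t l).
Proof.
set d0 := (t, j).
pose y u := iter u pi d0.
have yS u : y u.+1 = sgm (mate pd (y u)) by [].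
have hex : exists s, (mate pd (y s)).1 == t.
  exists (order pi d0).-1.
  have h := iter_order pi_inj d0.
  have hp := order_gt0 pi d0.
  rewrite -(prednK hp) /= in h.
  have : mate pd (y (order pi d0).-1) = sgm d0.
    by rewrite -[mate _ _]sgmK; congr sgm; exact: h.
  by move=> ->.
case: (ex_minnP hex) => s0 hs0 hmin.
have hne : mate pd (y s0) != d0.
  apply/negP => /eqP heq.
  have key : forall u, (u <= s0)%N -> mate pd (y (s0 - u)) = y u.
    elim=> [|u IH] hu; first by rewrite subn0.
    have IH' := IH (ltnW hu).
    have e1 : y (s0 - u) = sgm (mate pd (y (s0 - u.+1))).
      by rewrite -yS subnSK.
    have e2 : y (s0 - u) = mate pd (y u) by rewrite -IH' mateK.
    by rewrite yS -e2 e1 sgmK.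
  have hpar := odd_double_half s0.
  case ho: (odd s0) hpar => /= hpar.
  - have hv : (s0./2.+1 <= s0)%N by rewrite -{2}hpar add1n ltnS -addnn leq_addr.
    have := key _ hv.
    have -> : (s0 - s0./2.+1 = s0./2)%N by rewrite -{1}hpar add1n subSS -addnn addnK.
    rewrite yS => /eqP; apply/negP; rewrite eq_sym; exact: sgm_ne.
  - have hv : (s0./2 <= s0)%N by rewrite -{2}hpar add0n -addnn leq_addr.
    have := key _ hv.
    have -> : (s0 - s0./2 = s0./2)%N by rewrite -{1}hpar add0n -addnn addnK.
    by move=> /eqP; apply/negP; have [] := mate_spec (y s0./2).
have chain : forall u, (u <= s0)%N -> connect (R0 pd t I) (pd t j) (lab (y u)).
  elim=> [|u IH] hu; first by [].
  apply: connect_trans (IH (ltnW hu)) _; apply: connect1.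
  have hk : (mate pd (y u)).1 != t.
    by apply/negP => /hmin; rewrite leqNgt hu.
  have [_ hl] := mate_spec (y u).
  apply/existsP; exists (mate pd (y u)).1; apply/existsP; exists (mate pd (y u)).2.
  apply/existsP; exists (sp (I (mate pd (y u)).1) (mate pd (y u)).2).
  by rewrite hk sp_sj hl yS /sgm /= !eqxx.
exists (mate pd (y s0)).2; split.
  move: hne; apply: contra => /eqP hj; apply/eqP.
  by rewrite /d0 -hj -(eqP hs0); case: (mate pd (y s0)).
have [_ hl] := mate_spec (y s0).
have -> : pd t (mate pd (y s0)).2 = lab (mate pd (y s0)) by rewrite (eqP hs0).
by rewrite hl; apply: chain.
Qed.
End Topo.

Local Open Scope ring_scope.

Section Alg.
Variables (n m : nat) (pd : 'I_n -> 'I_4 -> 'I_m) (F : fieldType).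
Hypothesis hF : 2%N \in [pchar F].
Local Notation KC := (KhC pd F).

Lemma addKC2 (v : KC) : v + v = 0.
Proof. by apply/ffunP => b; rewrite !ffunE addrr_pchar2. Qed.

Lemma scvD a (u v : KC) : scv a (u + v) = scv a u + scv a v.
Proof. by apply/ffunP => b; rewrite !ffunE mulrDr. Qed.
Lemma scv0 a : scv a (0 : KC) = 0.
Proof. by apply/ffunP => b; rewrite !ffunE mulr0. Qed.
Lemma scv_sum a (I : Type) (r : seq I) (P : pred I) (f : I -> KC) :
  scv a (\sum_(i <- r | P i) f i) = \sum_(i <- r | P i) scv a (f i).
Proof. exact: (big_morph (scv a) (scvD a) (scv0 a)). Qed.
Lemma scvDl a b (v : KC) : scv (a + b) v = scv a v + scv b v.
Proof. by apply/ffunP => x; rewrite !ffunE mulrDl. Qed.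
Lemma scv0l (v : KC) : scv 0 v = 0.
Proof. by apply/ffunP => x; rewrite !ffunE mul0r. Qed.
Lemma scv1 (v : KC) : scv 1 v = v.
Proof. by apply/ffunP => x; rewrite !ffunE mul1r. Qed.
Lemma scvA a b (v : KC) : scv a (scv b v) = scv (a * b) v.
Proof. by apply/ffunP => x; rewrite !ffunE mulrA. Qed.

Section LinExt.
Variable g : KhBasis pd -> KC.
Lemma lin_extD (u v : KC) : lin_ext g (u + v) = lin_ext g u + lin_ext g v.
Proof. by rewrite /lin_ext -big_split; apply: eq_bigr => b _; rewrite ffunE scvDl. Qed.
Lemma lin_ext0 : lin_ext g 0 = 0.
Proof. by rewrite /lin_ext big1 // => b _; rewrite ffunE scv0l. Qed.
Lemma lin_ext_sum (I : Type) (r : seq I) (P : pred I) (f : I -> KC) :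
  lin_ext g (\sum_(i <- r | P i) f i) = \sum_(i <- r | P i) lin_ext g (f i).
Proof. exact: (big_morph (lin_ext g) lin_extD lin_ext0). Qed.
Lemma lin_extZ a v : lin_ext g (scv a v) = scv a (lin_ext g v).
Proof. by rewrite /lin_ext scv_sum; apply: eq_bigr => b _; rewrite ffunE scvA. Qed.
End LinExt.

Lemma lin_ext_comp (f g : KhBasis pd -> KC) v :
  lin_ext g (lin_ext f v) = lin_ext (fun b => lin_ext g (f b)) v.
Proof. by rewrite [lin_ext f v]/lin_ext lin_ext_sum; apply: eq_bigr => b _; rewrite lin_extZ. Qed.

Lemma lin_ext_addf (f g : KhBasis pd -> KC) v :
  lin_ext (fun b => f b + g b) v = lin_ext f v + lin_ext g v.
Proof. by rewrite /lin_ext -big_split; apply: eq_bigr => b _; rewrite scvD. Qed.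

Lemma lin_ext_eqf (f g : KhBasis pd -> KC) v : f =1 g -> lin_ext f v = lin_ext g v.
Proof. by move=> h; rewrite /lin_ext; apply: eq_bigr => b _; rewrite h. Qed.

Lemma lin_ext_bv (G : resolution n -> {set 'I_m} -> KC) I S :
  basis_ok pd (I, S) ->
  lin_ext (fun b => G (val b).1 (val b).2) (bv pd F I S) = G I S.
Proof.
move=> h; rewrite /lin_ext (bigD1 (exist _ (I, S) h)) //= big1 ?addr0.
  by rewrite ffunE eqxx scv1.
move=> b hb; rewrite ffunE; case: eqP => [e|_]; last by rewrite scv0l.
by move: hb; rewrite (_ : b = exist _ (I, S) h) ?eqxx //; apply/val_inj.
Qed.

Definition monoc (I : resolution n) (cs : seq 'I_m) : KC :=
  if uniq cs then bv pd F I [set x in cs] else 0.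
Definition mono (I : resolution n) (s : seq 'I_m) := monoc I (map (circ pd I) s).

Lemma monoc_perm I cs cs' : perm_eq cs cs' -> monoc I cs = monoc I cs'.
Proof.
move=> h; rewrite /monoc (perm_uniq h); congr (if _ then bv _ _ _ _ else _).
by apply/setP => x; rewrite !inE (perm_mem h).
Qed.

Lemma mono_perm I s s' : perm_eq (map (circ pd I) s) (map (circ pd I) s') -> mono I s = mono I s'.
Proof. exact: monoc_perm. Qed.

Lemma mono_permS I s s' : perm_eq s s' -> mono I s = mono I s'.
Proof. by move=> h; apply: mono_perm; apply: perm_map. Qed.

Lemma mono_dup I x y t : circ pd I x = circ pd I y -> mono I (x :: y :: t) = 0.
Proof. by move=> h; rewrite /mono /monoc /= h inE eqxx. Qed.

Lemma mono_nuniq I s : ~~ uniq (map (circ pd I) s) -> mono I s = 0.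
Proof. by rewrite /mono /monoc => /negbTE ->. Qed.

Lemma mono_cons I x y t : circ pd I x = circ pd I y -> mono I (x :: t) = mono I (y :: t).
Proof. by move=> h; rewrite /mono /= h. Qed.

Lemma lin_ext_mono (G : resolution n -> {set 'I_m} -> KC) I s :
  lin_ext (fun b => G (val b).1 (val b).2) (mono I s) =
  if uniq (map (circ pd I) s) then G I [set x in map (circ pd I) s] else 0.
Proof.
rewrite /mono /monoc; case: ifP => _; last exact: lin_ext0.
apply: lin_ext_bv; apply/subsetP => x; rewrite !inE => /mapP[y _ ->].
by rewrite /= circ_circ.
Qed.

Lemma uniq_map_weak (f g : 'I_m -> 'I_m) s :
  (forall x y, g x = g y -> f x = f y) -> uniq (map f s) -> uniq (map g s).
Proof.
move=> h; elim: s => //= x s IH /andP[hx hu]; rewrite IH // andbT.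
apply: contra hx => /mapP[y hy e]; apply/mapP; exists y => //; exact: h.
Qed.

Lemma card_setseq (cs : seq 'I_m) : #|[set x in cs]| = #|cs|.
Proof. by apply: eq_card => x; rewrite inE. Qed.

Lemma mulx_mono J a s :
  uniq (map (circ pd J) s) ->
  mulx pd F J (circ pd J a) [set x in map (circ pd J) s] = mono J (a :: s).
Proof.
move=> hu; rewrite /mulx /mono /monoc /= hu andbT inE.
case: ifP => // _; congr bv; apply/setP => x; rewrite !inE.
by [].
Qed.

End Alg.

Section Rep.
Variables (n m : nat) (pd : 'I_n -> 'I_4 -> 'I_m) (F : fieldType).
Variables (J : resolution n) (a c : 'I_m).
Local Notation cJ := (circ pd J).
Definition relx (y z : 'I_m) :=
  cJ y = cJ z \/ (cJ y = cJ a /\ cJ z = cJ c) \/ (cJ y = cJ c /\ cJ z = cJ a).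

Lemma swap_front (w : 'I_m) u y s : perm_eq (w :: u ++ y :: s) (y :: w :: u ++ s).
Proof.
have -> : w :: u ++ y :: s = (w :: u) ++ [:: y] ++ s by [].
by rewrite perm_catCA.
Qed.

Lemma swap2 (T : eqType) (x y : T) r : perm_eq (x :: y :: r) (y :: x :: r).
Proof. by apply/permP => P /=; rewrite addnCA. Qed.

Lemma rep1 u y z s : relx y z ->
  mono pd F J (a :: u ++ y :: s) + mono pd F J (c :: u ++ y :: s) =
  mono pd F J (a :: u ++ z :: s) + mono pd F J (c :: u ++ z :: s).
Proof.
rewrite !(mono_permS pd F J (swap_front _ _ _ _)).
case=> [h|[[h1 h2]|[h1 h2]]].
- by rewrite !(mono_cons F _ h).
- rewrite (mono_dup F _ h1) (mono_dup F _ h2) add0r addr0.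
  apply: (mono_perm F) => /=; rewrite h1 h2.
  exact: swap2.
- rewrite (mono_dup F _ h1) (mono_dup F _ h2) add0r addr0.
  apply: (mono_perm F) => /=; rewrite h1 h2.
  exact: swap2.
Qed.

Lemma rep (g : 'I_m -> 'I_m) s : (forall x, relx (g x) x) ->
  mono pd F J (a :: map g s) + mono pd F J (c :: map g s) =
  mono pd F J (a :: s) + mono pd F J (c :: s).
Proof.
move=> hg; suff H : forall u, mono pd F J (a :: u ++ map g s) + mono pd F J (c :: u ++ map g s) =
  mono pd F J (a :: u ++ s) + mono pd F J (c :: u ++ s) by exact: (H [::]).
elim: s => [|x s IH] u //=.
rewrite -cat_rcons IH cat_rcons; exact: rep1.
Qed.
End Rep.

Section Steps.
Variables (n m : nat) (pd : 'I_n -> 'I_4 -> 'I_m).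
Hypothesis wf : pd_wf pd.
Local Notation conn := (conn pd).
Local Notation sa t := (pd t o0).
Local Notation sc t := (pd t o2).

Lemma sA (I : resolution n) t : ~~ conn I (sa t) (sc t) -> forall x y,
  conn (flip I t) x y = [|| conn I x y, conn I x (sa t) && conn I y (sc t) | conn I x (sc t) && conn I y (sa t)].
Proof. by apply: stepA => I' j; exact: topo. Qed.

Lemma merged (I : resolution n) t : ~~ conn I (sa t) (sc t) -> conn (flip I t) (sa t) (sc t).
Proof. by move/sA => ->; rewrite !conn0 /= orbT. Qed.

Lemma coarse (I : resolution n) t x y : ~~ conn I (sa t) (sc t) -> conn I x y -> conn (flip I t) x y.
Proof. by move/sA => -> ->. Qed.

Lemma sB (I : resolution n) t : conn I (sa t) (sc t) -> ~~ conn (flip I t) (sa t) (sc t) -> forall x y,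
  conn I x y = [|| conn (flip I t) x y, conn (flip I t) x (sa t) && conn (flip I t) y (sc t)
                  | conn (flip I t) x (sc t) && conn (flip I t) y (sa t)].
Proof. by move=> _ h x y; rewrite -(sA h) flipK. Qed.

Lemma fine (I : resolution n) t x y : conn I (sa t) (sc t) -> conn (flip I t) x y -> conn I x y.
Proof.
move=> h; case: (boolP (conn (flip I t) (sa t) (sc t))) => h2.
  by rewrite (stepC h h2).
by rewrite (sB h h2) => ->.
Qed.

Lemma circles_le (I J : resolution n) : (forall x y, conn I x y -> conn J x y) ->
  (#|circles pd J| <= #|circles pd I|)%N.
Proof.
move=> hIJ; apply: leq_trans (leq_imset_card (circ pd J) (circles pd I)).
apply: subset_leq_card; apply/subsetP => e; rewrite inE => /eqP he.
apply/imsetP; exists (circ pd I e); first by rewrite inE circ_circ.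
rewrite -{1}he; apply/esym/circ_eq; apply: hIJ; rewrite connC; exact: conn_circ.
Qed.

Lemma circles_lt (I J : resolution n) x y : (forall x y, conn I x y -> conn J x y) ->
  conn J x y -> ~~ conn I x y -> (#|circles pd J| < #|circles pd I|)%N.
Proof.
move=> hIJ hJ hI.
have H1 : (#|circles pd J| <= #|circ pd J @: circles pd I|)%N.
  apply: subset_leq_card; apply/subsetP => e; rewrite inE => /eqP he.
  apply/imsetP; exists (circ pd I e); first by rewrite inE circ_circ.
  rewrite -{1}he; apply/esym/circ_eq; apply: hIJ; rewrite connC; exact: conn_circ.
apply: leq_ltn_trans H1 _; rewrite ltn_neqAle leq_imset_card andbT.
apply/negP => /imset_injP hinj.
have ex : circ pd I x = circ pd I y.
  apply: hinj; rewrite ?inE ?circ_circ //.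
  apply/circ_eq.
  apply: conn_trans (_ : conn J (circ pd I x) x) _; first by rewrite connC; apply: hIJ; exact: conn_circ.
  apply: conn_trans hJ _; apply: hIJ; exact: conn_circ.
by move: hI; rewrite -circP ex eqxx.
Qed.

Lemma merge_iff (I : resolution n) t :
  (#|circles pd (flip I t)| < #|circles pd I|)%N = ~~ conn I (sa t) (sc t).
Proof.
case: (boolP (conn I (sa t) (sc t))) => h /=.
  apply/negbTE; rewrite -leqNgt; apply: circles_le => x y; exact: fine.
apply: (circles_lt (x := sa t) (y := sc t)) => //.
  by move=> x y; apply: coarse.
exact: merged.
Qed.
End Steps.

Section Sad.
Variables (n m : nat) (pd : 'I_n -> 'I_4 -> 'I_m) (F : fieldType).
Hypothesis wf : pd_wf pd.
Hypothesis hF : 2%N \in [pchar F].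
Local Notation conn := (conn pd).
Local Notation sa t := (pd t o0).
Local Notation sc t := (pd t o2).
Local Notation KC := (KhC pd F).
Local Notation mono := (mono pd F).
Local Notation circ := (circ pd).
Local Notation conn_circ := (conn_circ pd).
Local Notation circ_eq := (circ_eq pd).
Local Notation connC := (connC pd).
Local Notation circ_circ := (circ_circ pd).
Local Notation mulx_mono := (mulx_mono F).
Local Notation mono_nuniq := (mono_nuniq F).

Definition pre (I : resolution n) k : seq (seq 'I_m) :=
  if ~~ conn I (sa k) (sc k) then [:: [::]] else [:: [:: sa k]; [:: sc k]].
Definition sad (I : resolution n) k s : KC :=
  \sum_(u <- pre I k) mono (flip I k) (u ++ s).

Lemma sadE I k s : sad I k s = if ~~ conn I (sa k) (sc k) then mono (flip I k) s
  else mono (flip I k) (sa k :: s) + mono (flip I k) (sc k :: s).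
Proof. by rewrite /sad /pre; case: ifP => _; rewrite !big_cons big_nil ?addr0. Qed.

Lemma imset_setseq (f : 'I_m -> 'I_m) (cs : seq 'I_m) :
  [set f y | y in [set x in cs]] = [set z in map f cs].
Proof.
apply/setP => z; rewrite inE; apply/imsetP/mapP => -[y hy ->]; exists y => //;
by rewrite ?inE in hy *.
Qed.

Lemma card_eq_uniq (f : 'I_m -> 'I_m) (cs : seq 'I_m) : uniq cs ->
  (#|[set z in map f cs]| == #|[set x in cs]|) = uniq (map f cs).
Proof.
move=> hu; rewrite !card_setseq (card_uniqP hu) -(size_map f cs).
by apply/eqP/card_uniqP.
Qed.

Lemma saddle_sad I k s :
  (if uniq (map (circ I) s) then saddle pd F I k [set x in map (circ I) s] else 0) = sad I k s.
Proof.
set J := flip I k.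
rewrite sadE /saddle inord0 inord2 -/J imset_setseq merge_iff //.
case: (boolP (conn I (sa k) (sc k))) => hac /=.
- have hrel : forall x, relx pd J (sa k) (sc k) (circ I x) x.
    move=> x; case: (boolP (conn J (sa k) (sc k))) => hJ.
      by left; apply/circ_eq; rewrite (stepC hac hJ) connC; apply: conn_circ.
    have := conn_circ I x; rewrite connC (sB wf hac hJ).
    case/or3P => [/circ_eq h|/andP[/circ_eq h1 /circ_eq h2]|/andP[/circ_eq h1 /circ_eq h2]].
    + by left.
    + by right; left.
    + by right; right.
  case hu: (uniq (map (circ I) s)).
  + have hu2 : uniq (map (circ J) (map (circ I) s)).
      rewrite -map_comp; apply: (uniq_map_weak (f := circ I)) hu => x y /= /circ_eq h.
      by rewrite -circ_circ -[RHS]circ_circ; apply/circ_eq; apply: (fine wf hac).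
    rewrite card_eq_uniq // hu2 /=.
    by rewrite !mulx_mono // rep.
  + have hn : ~~ uniq (map (circ J) (map (circ I) s)).
      by apply: contra (negbT hu) => /map_uniq.
    by rewrite -(rep F _ hrel) !mono_nuniq ?addr0 //= (negbTE hn) andbF.
- case hu: (uniq (map (circ I) s)).
  + have em : map (circ J) (map (circ I) s) = map (circ J) s.
      rewrite -map_comp; apply: eq_map => x /=; apply/circ_eq.
      by rewrite connC; apply: (coarse wf hac); apply: conn_circ.
    rewrite em -{1}em card_eq_uniq // em /mono /monoc.
    by case: (uniq _).
  + rewrite mono_nuniq //; apply: contra (negbT hu).
    apply: uniq_map_weak => x y /circ_eq h; apply/circ_eq; exact: (coarse wf hac).
Qed.
End Sad.

Section Comm.
Variables (n m : nat) (pd : 'I_n -> 'I_4 -> 'I_m) (F : fieldType).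
Hypothesis wf : pd_wf pd.
Hypothesis hF : 2%N \in [pchar F].
Local Notation conn := (conn pd).
Local Notation sa t := (pd t o0).
Local Notation sc t := (pd t o2).
Local Notation KC := (KhC pd F).
Local Notation mono := (mono pd F).
Local Notation circ := (circ pd).
Local Notation conn_circ := (conn_circ pd).
Local Notation circ_eq := (circ_eq pd).
Local Notation connC := (connC pd).
Local Notation circ_circ := (circ_circ pd).
Local Notation sad := (sad pd F).
Local Notation pre := (pre pd).

Lemma pair0 (Q : resolution n) x y t : conn Q x y -> mono Q (x :: t) + mono Q (y :: t) = 0.
Proof. by move/circ_eq => h; rewrite (mono_cons F t h) (addKC2 hF). Qed.

Lemma inner0 (Q : resolution n) x y z t : conn Q x y ->
  mono Q (z :: x :: t) = mono Q (z :: y :: t).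
Proof. by move/circ_eq => h; rewrite /Pilot.Submission.mono /= h. Qed.

Lemma pairsw (Q : resolution n) x y x' y' t :
  (circ Q x = circ Q x' /\ circ Q y = circ Q y') \/ (circ Q x = circ Q y' /\ circ Q y = circ Q x') ->
  mono Q (x :: t) + mono Q (y :: t) = mono Q (x' :: t) + mono Q (y' :: t).
Proof.
case=> [[h1 h2]|[h1 h2]]; first by rewrite (mono_cons F t h1) (mono_cons F t h2).
by rewrite (mono_cons F t h1) (mono_cons F t h2) addrC.
Qed.

Lemma composite (I : resolution n) i s :
  \sum_(u <- pre I i) sad (flip I i) i (u ++ s) = mono I (sa i :: s) + mono I (sc i :: s).
Proof.
rewrite /Pilot.Submission.pre; case: (boolP (conn I (sa i) (sc i))) => h /=.
- rewrite !big_cons big_nil addr0 !sadE flipK /=.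
  case: (boolP (conn (flip I i) (sa i) (sc i))) => h2 /=.
  + have e := h; move/circ_eq: e => e.
    rewrite !(mono_dup F _ e) !(mono_dup F _ (esym e)) ?(mono_dup F _ (erefl _)).
    by rewrite !addr0 (pair0 _ h).
  + by [].
- rewrite big_cons big_nil addr0 /= sadE flipK (merged wf h) /=.
  by [].
Qed.

Lemma expand (I : resolution n) i k s :
  \sum_(u <- pre I i) sad (flip I i) k (u ++ s) =
  if ~~ conn I (sa i) (sc i) then
    (if ~~ conn (flip I i) (sa k) (sc k) then mono (flip (flip I i) k) s
     else mono (flip (flip I i) k) (sa k :: s) + mono (flip (flip I i) k) (sc k :: s))
  else (if ~~ conn (flip I i) (sa k) (sc k) then
          mono (flip (flip I i) k) (sa i :: s) + mono (flip (flip I i) k) (sc i :: s)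
        else (mono (flip (flip I i) k) (sa k :: sa i :: s) + mono (flip (flip I i) k) (sc k :: sa i :: s))
           + (mono (flip (flip I i) k) (sa k :: sc i :: s) + mono (flip (flip I i) k) (sc k :: sc i :: s))).
Proof.
rewrite /Pilot.Submission.pre; case: ifP => h.
  by rewrite big_cons big_nil addr0 /= sadE.
by rewrite big_cons big_cons big_nil addr0 /= sadE sadE; case: ifP.
Qed.

Lemma commute (I : resolution n) i k s : k != i ->
  \sum_(u <- pre I i) sad (flip I i) k (u ++ s) = \sum_(u <- pre I k) sad (flip I k) i (u ++ s).
Proof.
move=> hki.
have eQ : flip (flip I k) i = flip (flip I i) k by rewrite flipC.
rewrite (expand I i k s) (expand I k i s) eQ.
case: (boolP (conn I (sa i) (sc i))) => h1; case: (boolP (conn (flip I i) (sa k) (sc k))) => h2;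
case: (boolP (conn I (sa k) (sc k))) => h3; case: (boolP (conn (flip I k) (sa i) (sc i))) => h4 /=.

-
  rewrite [in RHS](mono_permS pd F _ (swap2 (sa i) (sa k) s)).
  rewrite [in RHS](mono_permS pd F _ (swap2 (sc i) (sa k) s)).
  rewrite [in RHS](mono_permS pd F _ (swap2 (sa i) (sc k) s)).
  rewrite [in RHS](mono_permS pd F _ (swap2 (sc i) (sc k) s)).
  by rewrite addrACA.
-
  have hQi : conn (flip (flip I i) k) (sa i) (sc i).
    by rewrite -eQ; exact: (merged wf h4).
  have hQk : conn (flip (flip I i) k) (sa k) (sc k).
    case: (boolP (conn (flip I k) (sa k) (sc k))) => hk.
      by rewrite -eQ; exact: (coarse wf h4 hk).
    have := h1; rewrite (sB wf h3 hk) (negbTE h4) /=.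
    move/circ_eq: hQi => hQi.
    case/orP=> /andP[/(coarse wf h4) e1 /(coarse wf h4) e2]; rewrite eQ in e1 e2;
      move/circ_eq: e1 => e1; move/circ_eq: e2 => e2; apply/circ_eq; congruence.
  rewrite (@inner0 _ _ _ (sa k) s hQi) (@inner0 _ _ _ (sc k) s hQi) (addKC2 hF).
  by rewrite (pair0 _ hQk).
- by rewrite (fine wf h1 h2) in h3.
- by rewrite (fine wf h1 h2) in h3.
-
  have hQk : conn (flip (flip I i) k) (sa k) (sc k) by exact: (merged wf h2).
  rewrite (@inner0 _ _ _ (sa i) s hQk) (@inner0 _ _ _ (sc i) s hQk) (addKC2 hF).
  have hQi : conn (flip (flip I i) k) (sa i) (sc i).
    case: (boolP (conn (flip I i) (sa i) (sc i))) => hi.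
      exact: (coarse wf h2 hi).
    have := h3; rewrite (sB wf h1 hi) (negbTE h2) /=.
    move/circ_eq: hQk => hQk.
    case/orP=> /andP[/(coarse wf h2) e1 /(coarse wf h2) e2];
      move/circ_eq: e1 => e1; move/circ_eq: e2 => e2; apply/circ_eq; congruence.
  by rewrite (pair0 _ hQi).
-
  have hQi : conn (flip (flip I i) k) (sa i) (sc i) by rewrite -eQ; exact: (merged wf h4).
  have hQk : conn (flip (flip I i) k) (sa k) (sc k) by exact: (merged wf h2).
  by rewrite (pair0 _ hQi) (pair0 _ hQk).
- by [].
- by rewrite (coarse wf h3 h1) in h4.
- by rewrite (fine wf h3 h4) in h1.
- by [].
-
  case: (boolP (conn (flip (flip I i) k) (sa i) (sc i))) => hq.
    have hq' : conn (flip (flip I k) i) (sa i) (sc i) by rewrite eQ.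
    have hQk : conn (flip (flip I i) k) (sa k) (sc k).
      by rewrite -eQ (stepC h4 hq'); exact: (merged wf h3).
    by rewrite (pair0 _ hq) (pair0 _ hQk).
  case: (boolP (conn (flip (flip I i) k) (sa k) (sc k))) => hq2.
    by rewrite (stepC h2 hq2) (merged wf h1) in hq.
  have := merged wf h1; rewrite (sB wf h2 hq2) (negbTE hq) /=.
  case/orP=> /andP[/circ_eq e1 /circ_eq e2]; apply: pairsw.
    by left; split.
  by right; split.
-
  have := h2; rewrite (sA wf h1) (negbTE h3) /=.
  have hk := merged wf h3; move/circ_eq: hk => hk.
  case/orP=> /andP[/(coarse wf h3) e1 /(coarse wf h3) e2];
    move/circ_eq: e1 => e1; move/circ_eq: e2 => e2; move/negP: h4; case; apply/circ_eq; congruence.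
- by rewrite (coarse wf h1 h3) in h2.
- by rewrite (coarse wf h1 h3) in h2.
-
  have := h4; rewrite (sA wf h3) (negbTE h1) /=.
  have hi := merged wf h1; move/circ_eq: hi => hi.
  case/orP=> /andP[/(coarse wf h1) e1 /(coarse wf h1) e2];
    move/circ_eq: e1 => e1; move/circ_eq: e2 => e2; move/negP: h2; case; apply/circ_eq; congruence.
- by [].
Qed.
End Comm.

Section Final.
Variables (n m : nat) (pd : 'I_n -> 'I_4 -> 'I_m) (F : fieldType).
Hypothesis wf : pd_wf pd.
Hypothesis hF : 2%N \in [pchar F].
Variables (wt : 'I_m -> F) (i : 'I_n).
Local Notation conn := (conn pd).
Local Notation sa t := (pd t o0).
Local Notation sc t := (pd t o2).
Local Notation KC := (KhC pd F).
Local Notation mono := (mono pd F).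
Local Notation circ := (circ pd).
Local Notation sad := (sad pd F).
Local Notation pre := (pre pd).

Definition wd (k : 'I_n) : F := wt (pd k (inord 1)) - wt (pd k (inord 0)).
Definition coef (J : resolution n) k := if J k then wd k else 1.
Definition Dimg (b : KhBasis pd) : KC := d0_img wt b + d1_img wt b.
Definition hb (b : KhBasis pd) : KC :=
  if (val b).1 i then saddle pd F (val b).1 i (val b).2 else 0.
Definition DG (J : resolution n) S : KC := \sum_k scv (coef J k) (saddle pd F J k S).
Definition Dseq (J : resolution n) s : KC := \sum_k scv (coef J k) (sad J k s).
Definition hseq (J : resolution n) s : KC := if J i then sad J i s else 0.

Lemma Dimg_eq b : Dimg b = DG (val b).1 (val b).2.
Proof.
rewrite /Dimg /d0_img /d1_img /DG [RHS](bigID (fun k => (val b).1 k)) /= addrC.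
congr (_ + _); apply: eq_bigr => k hk; rewrite /coef.
  by rewrite (negbTE hk) scv1.
by rewrite hk.
Qed.

Lemma lin_D J s : lin_ext Dimg (mono J s) = Dseq J s.
Proof.
rewrite (lin_ext_eqf _ Dimg_eq) (lin_ext_mono (fun J S => DG J S)) /Dseq /DG.
case hu: (uniq _).
  by apply: eq_bigr => k _; rewrite -(saddle_sad F wf) hu.
by rewrite big1 // => k _; rewrite -(saddle_sad F wf) hu scv0.
Qed.

Lemma lin_h J s : lin_ext hb (mono J s) = hseq J s.
Proof.
rewrite (lin_ext_mono (fun J S => if J i then saddle pd F J i S else 0)) /hseq.
by case hu: (uniq _); case: (J i) => //; rewrite -(saddle_sad F wf) hu.
Qed.

Lemma PQ (I : resolution n) j p q s : p = pd i j -> q = pd i (ordS (ordS j)) ->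
  mono I (p :: s) + mono I (q :: s) = mono I (sa i :: s) + mono I (sc i :: s).
Proof.
move=> -> ->; elim/ord4P: j.
- have -> : ordS (ordS o0) = o2 by apply/val_inj.
  by [].
- rewrite (_ : ordS (ordS o1) = o3); last by apply/val_inj.
  case hI: (I i).
  + have e1 : circ I (pd i o1) = circ I (sc i) by apply/circ_eq; apply: conn_join; rewrite hI.
    have e2 : circ I (pd i o3) = circ I (sa i) by apply/circ_eq; apply: conn_join; rewrite hI.
    by rewrite (mono_cons F s e1) (mono_cons F s e2) addrC.
  + have e1 : circ I (pd i o1) = circ I (sa i) by apply/circ_eq; rewrite connC; apply: conn_join; rewrite hI.
    have e2 : circ I (pd i o3) = circ I (sc i) by apply/circ_eq; rewrite connC; apply: conn_join; rewrite hI.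
    by rewrite (mono_cons F s e1) (mono_cons F s e2).
- have -> : ordS (ordS o2) = o0 by apply/val_inj.
  by rewrite addrC.
- rewrite (_ : ordS (ordS o3) = o1); last by apply/val_inj.
  case hI: (I i).
  + have e1 : circ I (pd i o1) = circ I (sc i) by apply/circ_eq; apply: conn_join; rewrite hI.
    have e2 : circ I (pd i o3) = circ I (sa i) by apply/circ_eq; apply: conn_join; rewrite hI.
    by rewrite (mono_cons F s e1) (mono_cons F s e2).
  + have e1 : circ I (pd i o1) = circ I (sa i) by apply/circ_eq; rewrite connC; apply: conn_join; rewrite hI.
    have e2 : circ I (pd i o3) = circ I (sc i) by apply/circ_eq; rewrite connC; apply: conn_join; rewrite hI.
    by rewrite (mono_cons F s e1) (mono_cons F s e2) addrC.
Qed.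

Lemma subKC2 (u v : KC) : u - v = u + v.
Proof. by apply/ffunP => b; rewrite !ffunE (oppr_pchar2 hF). Qed.

Lemma lin_sad_h J k s : lin_ext hb (sad J k s) = \sum_(u <- pre J k) hseq (flip J k) (u ++ s).
Proof. by rewrite /Pilot.Submission.sad lin_ext_sum; apply: eq_bigr => u _; rewrite lin_h. Qed.

Lemma lin_sad_D J k s : lin_ext Dimg (sad J k s) = \sum_(u <- pre J k) Dseq (flip J k) (u ++ s).
Proof. by rewrite /Pilot.Submission.sad lin_ext_sum; apply: eq_bigr => u _; rewrite lin_D. Qed.

Lemma Hb_D I s : lin_ext hb (Dseq I s) =
  \sum_k scv (coef I k) (\sum_(u <- pre I k) hseq (flip I k) (u ++ s)).
Proof. by rewrite /Dseq lin_ext_sum; apply: eq_bigr => k _; rewrite lin_extZ lin_sad_h. Qed.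

Lemma D_h I s : lin_ext Dimg (sad I i s) =
  \sum_k scv (coef (flip I i) k) (\sum_(u <- pre I i) sad (flip I i) k (u ++ s)).
Proof.
rewrite lin_sad_D /Dseq exchange_big /=; apply: eq_bigr => k _.
by rewrite scv_sum.
Qed.

Lemma per_basis p q j (hp : p = pd i j) (hq : q = pd i (ordS (ordS j))) (b : KhBasis pd) :
  mulx pd F (val b).1 (circ (val b).1 p) (val b).2 + mulx pd F (val b).1 (circ (val b).1 q) (val b).2
  = lin_ext Dimg (hb b) + lin_ext hb (Dimg b).
Proof.
case: b => [[I S] hS].
rewrite /hb Dimg_eq /DG /=.
set s := enum S.
have ms : map (circ I) s = s.
  apply: map_id_in => x; rewrite mem_enum => hx.
  by move/subsetP: hS => /(_ x hx); rewrite inE => /eqP.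
have eS : [set x in map (circ I) s] = S by rewrite ms; apply/setP => x; rewrite inE mem_enum.
have us : uniq (map (circ I) s) by rewrite ms enum_uniq.
have hSad k : saddle pd F I k S = sad I k s by rewrite -(saddle_sad F wf) us eS.
have hX x : mulx pd F I (circ I x) S = mono I (x :: s) by rewrite -[in LHS]eS (mulx_mono F).
rewrite hX hX (PQ _ _ hp hq).
have -> : \sum_k scv (coef I k) (saddle pd F I k S) = Dseq I s.
  by apply: eq_bigr => k _; rewrite hSad.
rewrite Hb_D.
case hIi: (I i).
- rewrite hSad D_h -big_split.
  rewrite (bigD1 i); last by [].
  have Hr : \sum_(k | k != i) (scv (coef (flip I i) k) (\sum_(u <- pre I i) sad (flip I i) k (u ++ s)) +
            scv (coef I k) (\sum_(u <- pre I k) hseq (flip I k) (u ++ s))) = 0.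
    apply: big1 => k hk.
    rewrite /coef flip_ne //.
    have -> : \sum_(u <- pre I k) hseq (flip I k) (u ++ s) = \sum_(u <- pre I k) sad (flip I k) i (u ++ s).
      by apply: eq_bigr => u _; rewrite /hseq flip_ne ?hIi // eq_sym.
    by rewrite (commute wf hF) // (addKC2 hF).
  have H0 : \sum_(u <- pre I i) hseq (flip I i) (u ++ s) = 0.
    by apply: big1 => u _; rewrite /hseq flip_t hIi.
  have Hc : coef (flip I i) i = 1 by rewrite /coef flip_t hIi.
  rewrite Hr H0 Hc scv0 scv1 (composite wf hF).
  by rewrite !Monoid.simpm.
- have Hr : \sum_(k | k != i) scv (coef I k) (\sum_(u <- pre I k) hseq (flip I k) (u ++ s)) = 0.
    apply: big1 => k hk.
    have -> : \sum_(u <- pre I k) hseq (flip I k) (u ++ s) = 0.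
      by apply: big1 => u _; rewrite /hseq flip_ne ?hIi // eq_sym.
    exact: scv0.
  have H1 : \sum_(u <- pre I i) hseq (flip I i) (u ++ s) = \sum_(u <- pre I i) sad (flip I i) i (u ++ s).
    by apply: eq_bigr => u _; rewrite /hseq flip_t hIi.
  have Hc : coef I i = 1 by rewrite /coef hIi.
  rewrite lin_ext0 (bigD1 i); last by [].
  rewrite Hr H1 Hc scv1 (composite wf hF).
  by rewrite !Monoid.simpm.
Qed.
End Final.

Theorem proposition6p4 (F : fieldType) (hF : 2%N \in [pchar F])
  (n m : nat) (pd : 'I_n -> 'I_4 -> 'I_m) (hD : link_diagram pd)
  (wt : 'I_m -> F) (hwt : component_weight pd wt)
  (i : 'I_n) (j : 'I_4) (p q : 'I_m)
  (hp : p = pd i j) (hq : q = pd i (ordS (ordS j))) :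
  exists h : KhBasis pd -> KhC pd F,
    forall v : KhC pd F,
      Xmark p v - Xmark q v = Kh_d wt (lin_ext h v) + lin_ext h (Kh_d wt v).
Proof.
have wf : pd_wf pd by case/andP: hD.
exists (hb F i) => v.
have e1 : Kh_d wt (lin_ext (hb F i) v) = lin_ext (fun b => lin_ext (Dimg wt) (hb F i b)) v.
  exact: lin_ext_comp.
have e2 : lin_ext (hb F i) (Kh_d wt v) = lin_ext (fun b => lin_ext (hb F i) (Dimg wt b)) v.
  exact: lin_ext_comp.
rewrite e1 e2 (subKC2 hF) /Xmark -!lin_ext_addf.
apply: lin_ext_eqf => b.
exact: (per_basis wf hF wt hp hq b).
Qed.
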